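(* Let $X$ be an Alexandroff space, $Y$ a topological space, and $f:X\to Y$ a map. Then $f$ has closed graph if and only if for every connected component $C$ of $X$, $f(C)$ is a singleton $\{y\}$ with $y$ a closed point of $Y$.
   Context: For a map $f:X\to Y$ its graph is $G_f=\{(x,f(x)):x\in X\}$; $f$ has closed graph if $G_f$ is closed in $X\times Y$ (product topology). A point $y\in Y$ is closed if $\{y\}$ is a closed set. A topological space $X$ is an Alexandroff space if the intersection of every nonempty family of open subsets of $X$ is open; equivalently, every point $a\in X$ has a smallest open neighbourhood, denoted $V_a$. *)

(* Defs.v *)
From HB Require Import structures.
From mathcomp Require Import all_boot all_order all_algebra.
From mathcomp Require Import all_classical all_reals all_analysis.
Set Implicit Arguments. Unset Strict Implicit. Unset Printing Implicit Defensive.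
Local Open Scope classical_set_scope.

Definition alexandroff (X : topologicalType) : Prop :=
  forall S : set (set X), S !=set0 -> (forall A, S A -> open A) ->
    open (\bigcap_(A in S) A).

Definition graph (X Y : Type) (f : X -> Y) : set (X * Y) :=
  [set p | p.2 = f p.1].

Definition closed_graph (X Y : topologicalType) (f : X -> Y) : Prop :=
  closed (graph f).

(* Main.v *)
Require Import Defs.
From HB Require Import structures.
From mathcomp Require Import all_boot all_order all_algebra.
From mathcomp Require Import all_classical all_reals all_analysis.
Local Open Scope classical_set_scope.

Section Aux.
Context {X : topologicalType}.
Hypothesis alX : alexandroff X.

Let V (a : X) := \bigcap_(A in [set A : set X | open A /\ A a]) A.

Lemma V_open a : open (V a).
Proof.
apply: alX; first by exists setT; split => //; exact: openT.
by move=> A [].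
Qed.

Lemma V_in a : V a a.
Proof. by move=> A []. Qed.

Lemma V_nbhs {a B} : nbhs a B -> V a `<=` B.
Proof.
rewrite nbhsE; move=> [U0 [oU Ua] UB] b Vb; apply: UB; exact: Vb.
Qed.

Lemma V_nbhsV a : nbhs a (V a).
Proof. apply: open_nbhs_nbhs; split; [exact: V_open | exact: V_in]. Qed.

Lemma V_closure {a b} : V a b -> closure [set b] a.
Proof.
move=> Vb B nB; exists b; split => //; exact: (V_nbhs nB _ Vb).
Qed.

Lemma open_inv {A : set X} : (forall a b, A a -> V a b -> A b) -> open A.
Proof.
move=> H; rewrite openE => a Aa.
apply: filterS (V_nbhsV a) => b Vb; exact: H Aa Vb.
Qed.

End Aux.

Theorem lemma3p4 (X Y : topologicalType) (f : X -> Y) :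
  alexandroff X ->
  (closed_graph f <->
   forall x : X, exists y : Y,
     f @` (connected_component [set: X] x) = [set y] /\ closed [set y]).
Proof.
move=> alX.
set V := fun a : X => \bigcap_(A in [set A : set X | open A /\ A a]) A.
split.
- move=> cg.
  have key : forall a b, V a b -> f b = f a.
    move=> a b Vb.
    suff : graph f (a, f b) by [].
    
    apply: cg => B [[P1 P2] /= [nP1 nP2] PB].
    exists (b, f b); split => //; apply: PB; split => /=.
    + exact: (V_nbhs nP1 _ Vb).
    + exact: nbhs_singleton nP2.
  move=> x; exists (f x); split.
    have sub : connected_component [set: X] x `<=` [set b | f b = f x].
      set C := connected_component [set: X] x.
      set A := [set b | f b = f x].
      have oA : open A.
        apply: (open_inv alX) => a b Aa Vb; rewrite /A /= (key a b Vb); exact: Aa.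
      have oAc : open (~` A).
        apply: (open_inv alX) => a b Aa Vb; rewrite /A /= (key a b Vb); exact: Aa.
      have := @component_connected X [set: X] x (C `&` A).
      move=> /(_ _ _ _) E.
      have E' : C `&` A = C.
        apply: E.
        + exists x; split => //; exact: connected_component_refl.
        + by exists A.
        + exists A => //; rewrite -[A]setCK; exact: open_closedC.
      by move=> b Cb; rewrite -E' in Cb; case: Cb.
    apply/seteqP; split.
      by move=> _ [b Cb <-]; exact: sub.
    move=> _ ->; exists x => //; exact: connected_component_refl.
  move=> z zcl.
  suff : graph f (x, z) by [].
  
  apply: cg => B [[P1 P2] /= [nP1 nP2] PB].
  exists (x, f x); split => //; apply: PB; split => /=.
  + exact: nbhs_singleton nP1.
  + by have [w [-> ?]] := zcl _ nP2.
- move=> H; rewrite /closed_graph /closed => -[a z] cl.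
  have [y [fC cy]] := H a.
  have fa : f a = y.
    have : [set y] (f a) by rewrite -fC; exists a => //; exact: connected_component_refl.
    by [].
  rewrite /graph /=.
  have : closure [set y] z; last by move=> /cy ->.
  move=> W nW.
  have nB : nbhs (a, z) (V a `*` W).
    exists (V a, W); [split => /=; [exact: V_nbhsV | exact: nW] | by []].
  have [[b w] [gbw [Vb Ww]]] := cl _ nB.
  exists y; split => //.
  suff : f b = y by move=> fb; rewrite /graph /= in gbw; rewrite -fb -gbw.
  have Cb : connected_component [set: X] b a.
    apply: (@component_closed X setT b (@closedT X)).
    have sub : [set b] `<=` connected_component [set: X] b.
      by move=> _ ->; exact: connected_component_refl.
    exact: (closureS sub (V_closure Vb)).
  have [y' [fC' _]] := H b.
  have e1 : f a = y' by have : [set y'] (f a) by rewrite -fC'; exists a.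
  have e2 : f b = y' by have : [set y'] (f b) by rewrite -fC'; exists b => //; exact: connected_component_refl.
  by rewrite e2 -fa e1.
Qed.
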